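(* Let $u,v$ be generalized Stirling permutations and $s,t$ planar trees of the same degree. Then (1) if $u\le_{Pw}v$ then $\pi(u)\le_{PT}\pi(v)$; (2) if $s\le_{PT}t$ then $\iota(s)\le_{Pw}\iota(t)$.
   Context: A planar tree has linearly ordered children at each node, each node being a leaf or having $\ge2$ children (internal node); degree = number of leaves minus one. A generalized Stirling permutation (GSP) is a planar tree together with a bijection $\kappa$ from its internal nodes to $\{1,\dots,N\}$ ($N$ = number of internal nodes) increasing from each internal node to its internal children; $\pi(u)$ is its underlying planar tree. Its word $\mathbf w(u)$: a leaf has empty word; a node $x$ with children $c_1,\dots,c_k$ has word $\mathbf w(c_1)\kappa(x)\mathbf w(c_2)\cdots\kappa(x)\mathbf w(c_k)$. For each planar tree $t$ there is exactly one GSP with underlying tree $t$ whose word is $213$-avoiding (no $i<j<k$ with $w_k>w_i>w_j$); it is denoted $\iota(t)$. Planar weak order: for packed words, $w^{-1}(a)=\{p:w_p=a\}$, $\mathrm{iInv}(w)=\{(a,b):a<b,\ \min w^{-1}(a)>\max w^{-1}(b)\}$, $T_a(w)$ = $w$ with letters $a,a+1$ swapped; the order is the reflexive–transitive closure of: $u$ is covered by $w$ iff $u=T_a(w)$ and $|\mathrm{iInv}(w)|=|\mathrm{iInv}(u)|+1$. On GSPs, $u\le_{Pw}v$ iff $\mathbf w(u)\le\mathbf w(v)$. Planar Tamari order: if an internal node $x$ has children $c_1,\dots,c_{a-1},y$ ($a\ge2$) with $y$ internal having children $d_1,\dots,d_{b+1}$ ($b\ge1$), the left rotation at $x$ replaces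 the subtree at $x$ by a node with children $z,d_2,\dots,d_{b+1}$, where $z$ is a new node with children $c_1,\dots,c_{a-1},d_1$. $\le_{PT}$ is the reflexive–transitive closure of ''$t$ is a left rotation of $s$''. *)

(* Defs.v *)
From mathcomp Require Import all_boot.
From Stdlib Require Import Relations.
Set Implicit Arguments. Unset Strict Implicit. Unset Printing Implicit Defensive.

Inductive tree : Type := Leaf : tree | Node : seq tree -> tree.

Fixpoint planar (t : tree) : bool :=
  match t with Leaf => true | Node cs => (2 <= size cs) && all planar cs end.

Fixpoint nleaves (t : tree) : nat :=
  match t with Leaf => 1 | Node cs => sumn (map nleaves cs) end.

Definition degree (t : tree) : nat := (nleaves t).-1.

(** * Generalized Stirling permutations: planar trees whose internal nodes carry labels *)
Inductive ltree : Type := LLeaf : ltree | LNode : nat -> seq ltree -> ltree.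

Fixpoint pi_tree (u : ltree) : tree :=
  match u with LLeaf => Leaf | LNode _ cs => Node (map pi_tree cs) end.

Fixpoint labels (u : ltree) : seq nat :=
  match u with LLeaf => [::] | LNode k cs => k :: flatten (map labels cs) end.

Fixpoint increasing (u : ltree) : bool :=
  match u with
  | LLeaf => true
  | LNode k cs =>
      all (fun c => match c with LLeaf => true | LNode k' _ => k < k' end) cs
      && all increasing cs
  end.

(** u is a GSP: underlying tree is planar, kappa is a bijection from the
    internal nodes onto {1,...,N} (N = number of internal nodes), increasing. *)
Definition gsp (u : ltree) : Prop :=
  [/\ planar (pi_tree u),
      perm_eq (labels u) (iota 1 (size (labels u))) & increasing u].

Fixpoint word (u : ltree) : seq nat :=
  match u with
  | LLeaf => [::]
  | LNode k cs =>
      match cs with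
      | [::] => [::]
      | c :: cs' => word c ++ flatten (map (fun d => k :: word d) cs')
      end
  end.

Definition avoids213 (w : seq nat) : Prop :=
  forall i j k, i < j -> j < k -> k < size w ->
    ~ (nth 0 w j < nth 0 w i /\ nth 0 w i < nth 0 w k).

(** iota(t) is characterized as the (unique) GSP with underlying tree t whose
    word avoids 213. *)
Definition is_iota (t : tree) (u : ltree) : Prop :=
  gsp u /\ pi_tree u = t /\ avoids213 (word u).

Definition maxletter (w : seq nat) : nat := foldr maxn 0 w.

Definition packed (w : seq nat) : bool :=
  all (fun a => 0 < a) w && all (fun a => a \in w) (iota 1 (maxletter w)).

Definition positions (w : seq nat) (a : nat) : seq nat :=
  [seq p <- iota 0 (size w) | nth 0 w p == a].

Definition iinv_pair (w : seq nat) (a b : nat) : bool :=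
  (a < b) && (last 0 (positions w b) < head 0 (positions w a)).

Definition iInv (w : seq nat) : seq (nat * nat) :=
  [seq ab <- [seq (a, b) | a <- iota 1 (maxletter w), b <- iota 1 (maxletter w)]
     | iinv_pair w ab.1 ab.2].

Definition Tswap (a : nat) (w : seq nat) : seq nat :=
  map (fun x => if x == a then a.+1 else if x == a.+1 then a else x) w.

Definition pw_cover (u w : seq nat) : Prop :=
  [/\ packed u, packed w &
      exists a, u = Tswap a w /\ size (iInv w) = (size (iInv u)).+1].

Definition pw_le_word (u w : seq nat) : Prop := clos_refl_trans _ pw_cover u w.

Definition pw_le (u v : ltree) : Prop := pw_le_word (word u) (word v).

Inductive lrot : tree -> tree -> Prop :=
| lrot_root (cs : seq tree) (d : tree) (ds : seq tree) :
    0 < size cs -> 0 < size ds ->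
    lrot (Node (rcons cs (Node (d :: ds)))) (Node (Node (rcons cs d) :: ds))
| lrot_child (l : seq tree) (c c' : tree) (r : seq tree) :
    lrot c c' -> lrot (Node (l ++ c :: r)) (Node (l ++ c' :: r)).

Definition pt_le (s t : tree) : Prop := clos_refl_trans _ lrot s t.

(* Main.v *)
Require Import Defs.
From mathcomp Require Import all_boot.
From mathcomp Require Import zify.
From Stdlib Require Import Relations.
Set Implicit Arguments. Unset Strict Implicit. Unset Printing Implicit Defensive.

Definition sig (a x : nat) := if x == a then a.+1 else if x == a.+1 then a else x.
Lemma TswapE a w : Tswap a w = map (sig a) w. Proof. by []. Qed.
Lemma sigK a : involutive (sig a).
Proof. move=> x; rewrite /sig; repeat case: eqP; lia. Qed.
Lemma sig_inj a : injective (sig a). Proof. exact: can_inj (sigK a). Qed.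
Lemma sig_eq a x y : (sig a x == y) = (x == sig a y).
Proof. by apply/eqP/eqP => [<-|->]; rewrite sigK. Qed.
Lemma mem_Tswap a w z : (z \in Tswap a w) = (sig a z \in w).
Proof. by rewrite TswapE -{1}(sigK a z) mem_map //; apply: sig_inj. Qed.
Lemma TswapK a w : Tswap a (Tswap a w) = w.
Proof. by rewrite !TswapE -map_comp (eq_map (sigK a)) map_id. Qed.
Lemma Tswap_id a l : a \notin l -> a.+1 \notin l -> Tswap a l = l.
Proof.
move=> h1 h2; rewrite TswapE; apply: map_id_in => x hx; rewrite /sig.
case: eqP => [e|_]; first by subst; rewrite hx in h1.
case: eqP => [e|_] //; by subst; rewrite hx in h2.
Qed.
Lemma Tswap_eqi a w : a \in w -> a.+1 \in w -> Tswap a w =i w.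
Proof.
move=> h1 h2 z; rewrite mem_Tswap /sig.
case: eqP => [->|_]; first by rewrite h1 h2.
case: eqP => [->|_] //; by rewrite h1 h2.
Qed.

(* sepb b c s : all b's before all c's *)
Fixpoint sepb (b c : nat) (s : seq nat) : bool :=
  match s with [::] => true | x :: s' => if x == c then b \notin s' else sepb b c s' end.

Lemma sepb_nob b c s : b \notin s -> sepb b c s.
Proof.
elim: s => //= x s IH; rewrite in_cons negb_or => /andP [_ h].
by case: ifP => // _; apply: IH.
Qed.
Lemma sepb_noc b c s : c \notin s -> sepb b c s.
Proof.
elim: s => //= x s IH; rewrite in_cons negb_or => /andP [h1 h].
rewrite eq_sym (negbTE h1); exact: IH.
Qed.
Lemma sepb_cat b c l r :
  sepb b c (l ++ r) = [&& sepb b c l, (c \in l) ==> (b \notin r) & sepb b c r].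
Proof.
elim: l => [|x l IH] /=; first by [].
rewrite in_cons mem_cat negb_or IH.
case: (x =P c) => [->|hx] /=; last first.
  by have -> : (c == x) = false by apply/eqP => e; apply: hx.
rewrite eqxx /=. case hb: (b \in r) => /=; first by rewrite !andbF.
by rewrite sepb_nob ?hb.
Qed.
Lemma sepb_subseq b c s1 s2 : subseq s1 s2 -> sepb b c s2 -> sepb b c s1.
Proof.
elim: s2 s1 => [|y s2 IH] [|x s1] //= hs h.
case: (eqVneq x y) hs => [exy|nxy] hs.
  subst y; move: h; case: (x == c) => h.
    apply/negP => hb1; move/negP: h; apply; exact: (mem_subseq hs).
  exact: IH.
move: h; case: (y == c) => h.
  apply: (@sepb_nob b c (x :: s1)); apply/negP => hb; move/negP: h; apply; exact: (mem_subseq hs).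
exact: (IH (x :: s1) hs h).
Qed.
Lemma sepb_Tswap a b c w : sepb b c (Tswap a w) = sepb (sig a b) (sig a c) w.
Proof.
elim: w => //= x w IH; rewrite sig_eq IH.
by rewrite -{1}(sigK a b) TswapE mem_map //; apply: sig_inj.
Qed.
Lemma sepb_contra b c w : sepb b c w -> sepb c b w -> b \in w -> c \in w -> b != c -> False.
Proof.
elim: w => //= x w IH h1 h2 hb hc ne.
move: h1 h2 hb hc; rewrite !in_cons.
case: (x =P c) => [exc|nxc] h1 h2 hb hc.
  by subst x; rewrite (negbTE ne) (negbTE h1) in hb.
case: (x =P b) h2 => [exb|nxb] h2.
  by subst x; rewrite eq_sym (negbTE ne) (negbTE h2) in hc.
have hb' : b \in w by move: hb; case: eqP => // e; subst; case: nxb.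
have hc' : c \in w by move: hc; case: eqP => // e; subst; case: nxc.
exact: IH.
Qed.

Definition joinm (m : nat) (ls : seq (seq nat)) : seq nat :=
  if ls is x :: xs then x ++ flatten (map (cons m) xs) else [::].

Lemma mem_flatten_cons (m : nat) (xs : seq (seq nat)) (z : nat) :
  (z \in flatten (map (cons m) xs)) = ((xs != [::]) && (z == m)) || (z \in flatten xs).
Proof.
elim: xs => //= x xs IH. rewrite in_cons mem_cat IH.
by rewrite mem_cat; case: (z == m); case: (z \in x); case: (xs != [::]); case: (z \in flatten xs).
Qed.
Lemma mem_joinm m ls z : z \in joinm m ls -> (z == m) || (z \in flatten ls).
Proof.
case: ls => //= x xs; rewrite mem_cat mem_flatten_cons mem_cat => /orP [->|/orP [/andP [_ ->]|->]]; rewrite ?orbT //.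
Qed.
Lemma mem_joinm_sep m ls : 1 < size ls -> m \in joinm m ls.
Proof. case: ls => [|x [|y ys]] //= _; by rewrite mem_cat in_cons eqxx orbT. Qed.
Lemma mem_joinm_in (m : nat) (ls : seq (seq nat)) (l : seq nat) (z : nat) : l \in ls -> z \in l -> z \in joinm m ls.
Proof.
case: ls => //= x xs; rewrite in_cons mem_cat => /orP [/eqP ->|hl] hz; first by rewrite hz.
rewrite mem_flatten_cons; have -> : z \in flatten xs by apply/flattenP; exists l. by rewrite !orbT.
Qed.
Lemma mem_joinm2 (m : nat) (ls : seq (seq nat)) (z : nat) :
  1 < size ls -> (z \in joinm m ls) = (z == m) || (z \in flatten ls).
Proof.
move=> h; apply/idP/idP; first exact: mem_joinm.
case/orP => [/eqP ->|/flattenP [l hl hz]]; first exact: mem_joinm_sep.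
exact: mem_joinm_in hl hz.
Qed.
Lemma joinm_rcons m L x : L != [::] -> joinm m (rcons L x) = joinm m L ++ m :: x.
Proof.
case: L => //= l L _; rewrite -cats1 map_cat flatten_cat /= cats0 catA //.
Qed.
Lemma joinm_rcons_cat m L x y : joinm m (rcons L (x ++ y)) = joinm m (rcons L x) ++ y.
Proof.
case: L => [|l L] /=; first by rewrite !cats0.
by rewrite -!cats1 !map_cat !flatten_cat /= !cats0 -!catA.
Qed.
Lemma joinm_rot m1 m2 L x xs :
  joinm m1 (rcons L (joinm m2 (x :: xs))) = joinm m2 (joinm m1 (rcons L x) :: xs).
Proof.
case: L => [|l L] /=; first by rewrite !cats0.
by rewrite -!cats1 !map_cat !flatten_cat /= !cats0 -!catA.
Qed.
Lemma Tswap_joinm a m ls : Tswap a (joinm m ls) = joinm (sig a m) (map (Tswap a) ls).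
Proof.
case: ls => //= x xs; rewrite !TswapE map_cat map_flatten -!map_comp.
by congr (_ ++ flatten _); apply: eq_map.
Qed.
Lemma map_joinm f m ls : map f (joinm m ls) = joinm (f m) (map (map f) ls).
Proof.
case: ls => //= x xs; rewrite map_cat map_flatten -!map_comp.
by congr (_ ++ flatten _); apply: eq_map.
Qed.
Lemma joinm_mid m L1 x L2 :
  joinm m (L1 ++ x :: L2) = flatten (map (fun y => y ++ [:: m]) L1) ++ x ++ flatten (map (cons m) L2).
Proof.
case: L1 => [|y L1] //=.
elim: L1 y => [|z L1 IH] y /=; first by rewrite cats0 -catA.
by rewrite IH -!catA.
Qed.

Fixpoint splitm (m : nat) (s : seq nat) : seq (seq nat) :=
  match s with
  | [::] => [:: [::]]
  | x :: s' => if x == m then [::] :: splitm m s'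
               else (x :: head [::] (splitm m s')) :: behead (splitm m s')
  end.

Lemma size_splitm m s : size (splitm m s) = (count_mem m s).+1.
Proof.
elim: s => //= x s IH; case: (x =P m) => [e|hx] /=; first by subst x; rewrite IH.
by rewrite size_behead IH.
Qed.
Lemma splitm_mem m s seg : seg \in splitm m s -> subseq seg s && (m \notin seg).
Proof.
elim: s seg => [|x s IH] seg; first by rewrite inE => /eqP ->.
have -> : splitm m (x :: s) = (if x == m then [::] :: splitm m s else (x :: head [::] (splitm m s)) :: behead (splitm m s)) by [].
case: eqP => [hx|hx].
  rewrite in_cons => /orP [/eqP ->//|/IH /andP [h1 h2]].
  by rewrite (subseq_trans h1 (subseq_cons _ _)).
have ne : splitm m s != [::] by rewrite -size_eq0 size_splitm.
rewrite in_cons => /orP [/eqP ->|hb].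
  case E: (splitm m s) ne => [|h t] // _.
  have /IH /andP [h1 h2] : h \in splitm m s by rewrite E mem_head.
  rewrite /= eqxx h1 in_cons negb_or h2 andbT /=; apply/eqP=> e; by rewrite e in hx.
have /IH /andP [h1 h2] : seg \in splitm m s by apply: mem_behead.
by rewrite (subseq_trans h1 (subseq_cons _ _)).
Qed.
Lemma joinm_splitm m s : joinm m (splitm m s) = s.
Proof.
elim: s => //= x s IH.
case E: (splitm m s) IH => [|h t] IH; first by move: (size_splitm m s); rewrite E.
case: (x =P m) => [e|_] /=; first subst x; by rewrite -IH.
Qed.
Lemma splitm_cat m l s : m \notin l ->
  splitm m (l ++ s) = (l ++ head [::] (splitm m s)) :: behead (splitm m s).
Proof.
elim: l => [|x l IH] /=.
  by case E: (splitm m s) => [|h t] //; move: (size_splitm m s); rewrite E.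
rewrite in_cons negb_or => /andP [hx hl]; rewrite eq_sym (negbTE hx) IH //.
Qed.
Lemma splitm_flat (m : nat) (xs : seq (seq nat)) : (forall l, l \in xs -> m \notin l) ->
  splitm m (flatten (map (cons m) xs)) = [::] :: xs.
Proof.
elim: xs => //= y ys IH h; rewrite eqxx splitm_cat ?IH //.
- by rewrite cats0.
- by move=> l hl; apply: h; rewrite in_cons hl orbT.
- by apply: h; rewrite mem_head.
Qed.
Lemma splitm_joinm (m : nat) (ls : seq (seq nat)) : ls != [::] -> (forall l, l \in ls -> m \notin l) ->
  splitm m (joinm m ls) = ls.
Proof.
case: ls => //= x xs _ h; rewrite splitm_cat ?splitm_flat /= ?cats0 //.
- by move=> l hl; apply: h; rewrite in_cons hl orbT.
- by apply: h; rewrite mem_head.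
Qed.

Definition minl (s : seq nat) : nat := if s is x :: s' then foldr minn x s' else 0.
Lemma minl_prop x s : (forall y, y \in x :: s -> foldr minn x s <= y) /\ foldr minn x s \in x :: s.
Proof.
elim: s => [|z s [IH1 IH2]] /=; first by split; [move=> y; rewrite inE => /eqP ->|rewrite mem_head].
split.
  move=> y; rewrite !in_cons => /orP [/eqP ->|/orP [/eqP ->|hy]].
  - have := IH1 x (mem_head _ _); lia.
  - lia.
  - have := IH1 y; rewrite in_cons hy orbT => /(_ isT); lia.
move: IH2; rewrite !in_cons => /orP [/eqP e|h].
  rewrite e; case: (leqP z x) => hzx; [apply/orP; right; apply/orP; left; apply/eqP; lia|].
  apply/orP; left; apply/eqP; lia.
case: (leqP z (foldr minn x s)) => hz.
  apply/orP; right; apply/orP; left; apply/eqP; lia.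
by rewrite h !orbT.
Qed.
Lemma minl_le s y : y \in s -> minl s <= y.
Proof. case: s => //= x s; exact: (minl_prop x s).1. Qed.
Lemma minl_mem s : s != [::] -> minl s \in s.
Proof. case: s => //= x s _; exact: (minl_prop x s).2. Qed.
Lemma minl_eq s m : m \in s -> (forall y, y \in s -> m <= y) -> minl s = m.
Proof.
move=> hm h; have h1 := minl_le hm.
have ne : s != [::] by apply/eqP => e; rewrite e in hm.
have := h _ (minl_mem ne); lia.
Qed.


Fixpoint Tf (n : nat) (s : seq nat) : tree :=
  match n with
  | 0 => Leaf
  | n'.+1 => if s is [::] then Leaf else Node (map (Tf n') (splitm (minl s) s))
  end.
Definition Tw (s : seq nat) : tree := Tf (size s) s.

Lemma seg_lt s seg : s != [::] -> seg \in splitm (minl s) s -> size seg < size s.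
Proof.
move=> ne /splitm_mem /andP [hsub hm].
have [le eqc] := size_subseq_leqif hsub.
rewrite ltn_neqAle le andbT eqc; apply/eqP => e; subst seg.
by rewrite (minl_mem ne) in hm.
Qed.

Lemma Tf_fuel n m s : size s <= n -> size s <= m -> Tf n s = Tf m s.
Proof.
elim: n m s => [|n IH] [|m] s /=.
- by [].
- by rewrite leqn0 => /nilP ->.
- by move=> _; rewrite leqn0 => /nilP ->.
case: s => [|x s'] // h1 h2; congr Node; apply/eq_in_map => seg hseg.
have := @seg_lt (x :: s') seg isT hseg => /= h.
move: h1 h2 => /= h1 h2; apply: IH; lia.
Qed.

Lemma Tw_unfold s : Tw s = if s is [::] then Leaf else Node (map Tw (splitm (minl s) s)).
Proof.
case: s => [|x s'] //; rewrite /Tw /=; congr Node; apply/eq_in_map => seg hseg.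
have := @seg_lt (x :: s') seg isT hseg => /= h.
apply: Tf_fuel => //; lia.
Qed.

Lemma Tw_joinm (m : nat) (ls : seq (seq nat)) : 1 < size ls -> (forall l, l \in ls -> forall y, y \in l -> m < y) ->
  Tw (joinm m ls) = Node (map Tw ls).
Proof.
move=> hs hl; have hm := mem_joinm_sep m hs.
have ge : forall y, y \in joinm m ls -> m <= y.
  move=> y /mem_joinm /orP [/eqP ->//|/flattenP [l hl1 hy]].
  by have := hl l hl1 y hy => /ltnW.
have mne : forall l, l \in ls -> m \notin l by move=> l h; apply/negP => /(hl l h); rewrite ltnn.
have nel : ls != [::] by apply/eqP => e; rewrite e in hs.
rewrite Tw_unfold; case E: (joinm m ls) => [|z zs]; first by rewrite E in hm.
by rewrite -E (minl_eq hm ge) splitm_joinm.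
Qed.

Lemma pt_child l c c' r : pt_le c c' -> pt_le (Node (l ++ c :: r)) (Node (l ++ c' :: r)).
Proof.
elim => [x y h|x|x y z _ h1 _ h2].
- by apply: rt_step; apply: lrot_child.
- exact: rt_refl.
- exact: rt_trans h1 h2.
Qed.

Lemma node_mono (T : Type) (f g : T -> tree) (ls : seq T) :
  (forall l, List.In l ls -> pt_le (f l) (g l)) -> pt_le (Node (map f ls)) (Node (map g ls)).
Proof.
move=> h; suff : forall pre, pt_le (Node (pre ++ map f ls)) (Node (pre ++ map g ls)) by move=> /(_ [::]).
elim: ls h => [|l ls IH] h pre /=; first exact: rt_refl.
apply: rt_trans (pt_child pre (map f ls) (h l (or_introl erefl))) _.
have := IH (fun x hx => h x (or_intror hx)) (rcons pre (g l)).
by rewrite -!cats1 -!catA.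
Qed.

Lemma mem_In (T : eqType) (x : T) s : x \in s -> List.In x s.
Proof. elim: s => //= y s IH; rewrite in_cons => /orP [/eqP ->|h]; [by left|by right; apply: IH]. Qed.

Lemma In_mem (T : eqType) (x : T) s : List.In x s -> x \in s.
Proof. elim: s => //= y s IH [->|h]; rewrite in_cons; first by rewrite eqxx. by rewrite IH ?orbT. Qed.

Lemma sig_a a : sig a a = a.+1. Proof. by rewrite /sig eqxx. Qed.
Lemma sig_a1 a : sig a a.+1 = a. Proof. rewrite /sig eqxx; case: eqP => //; lia. Qed.

Lemma rot_core a (SS' : seq (seq nat)) (Sk : seq nat) : SS' != [::] ->
  (forall l, l \in SS' -> forall y, y \in l -> a < y /\ y != a.+1) ->
  (forall y, y \in Sk -> a < y) -> a.+1 \in Sk ->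
  pt_le (Tw (joinm a (rcons SS' Sk))) (Tw (Tswap a (joinm a (rcons SS' Sk)))).
Proof.
move=> neS hS hSk ha1.
have [RR [ESk szRR RRl]] : exists RR, [/\ Sk = joinm a.+1 RR, 1 < size RR &
    forall R, R \in RR -> forall y, y \in R -> a.+1 < y].
  exists (splitm a.+1 Sk); split; first by rewrite joinm_splitm.
    by rewrite size_splitm ltnS -has_count has_pred1.
  move=> R /splitm_mem /andP [h1 h2] y hy.
  have := hSk y (mem_subseq h1 hy).
  have : y != a.+1 by apply/negP => /eqP e; subst y; rewrite hy in h2.
  lia.
subst Sk; clear ha1 hSk; case: RR szRR RRl => [|R0 RR'] //= szRR RRl.
have neR : RR' != [::] by apply/eqP => e; rewrite e in szRR.
have SSid : map (Tswap a) SS' = SS'.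
  apply: map_id_in => l hl; apply: Tswap_id; apply/negP => h; have := hS l hl _ h; lia.
have RRid : map (Tswap a) RR' = RR'.
  apply: map_id_in => l hl; apply: Tswap_id; apply/negP => h;
    have := RRl l (@mem_behead _ (R0 :: RR') l hl) _ h; lia.
have R0id : Tswap a R0 = R0.
  apply: Tswap_id; apply/negP => h; have := RRl R0 (mem_head _ _) _ h; lia.
have RRid2 : map (Tswap a) (R0 :: RR') = R0 :: RR' by rewrite /= R0id RRid.
have ER : Tswap a (joinm a (rcons SS' (joinm a.+1 (R0 :: RR')))) =
          joinm a (joinm a.+1 (rcons SS' R0) :: RR').
  by rewrite Tswap_joinm sig_a map_rcons SSid Tswap_joinm sig_a1 RRid2 joinm_rot.
have hSS2 : 1 < size (rcons SS' R0) by rewrite size_rcons; move: neS; clear; case: SS'.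
have EL : Tw (joinm a (rcons SS' (joinm a.+1 (R0 :: RR')))) =
          Node (rcons (map Tw SS') (Node (map Tw (R0 :: RR')))).
  rewrite Tw_joinm; first last.
  - move=> l; rewrite mem_rcons in_cons => /orP [/eqP ->|hl] y.
      move/mem_joinm => /orP [/eqP ->//|/flattenP [R hR hy]]; have := RRl R hR y hy; lia.
    by move=> hy; case: (hS l hl y hy).
  - by rewrite size_rcons; move: neS; clear; case: SS'.
  rewrite map_rcons Tw_joinm // => l hl y hy; exact: RRl hl y hy.
have ER2 : Tw (joinm a (joinm a.+1 (rcons SS' R0) :: RR')) =
           Node (Node (rcons (map Tw SS') (Tw R0)) :: map Tw RR').
  rewrite Tw_joinm; first last.
  - move=> l; rewrite in_cons => /orP [/eqP ->|hl] y.
      move/mem_joinm => /orP [/eqP ->//|/flattenP [R]].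
      rewrite mem_rcons in_cons => /orP [/eqP ->|hR] hy.
        have := RRl R0 (mem_head _ _) y hy; lia.
      by case: (hS R hR y hy).
    move=> hy; have := RRl l (@mem_behead _ (R0 :: RR') l hl) y hy; lia.
  - by move: neR; clear; case: RR'.
  rewrite /= Tw_joinm // -?map_rcons // => l; rewrite mem_rcons in_cons => /orP [/eqP ->|hl] y hy.
    have := RRl R0 (mem_head _ _) y hy; lia.
  by case: (hS l hl y hy) => h1 h2; move: h2 h1; lia.
rewrite ER EL ER2 /=; apply: rt_step; apply: lrot_root; rewrite size_map.
  by move: neS; clear; case: SS'.
by move: neR; clear; case: RR'.
Qed.

Lemma Tswap_mono a n s : size s <= n -> sepb a a.+1 s -> pt_le (Tw s) (Tw (Tswap a s)).
Proof.
elim: n s => [|n IH] s.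
  by rewrite leqn0 => /nilP -> _; apply: rt_refl.
case: s => [|x0 s0]; first by move=> _ _; apply: rt_refl.
set s := x0 :: s0 => hsz hsep.
have ne : s != [::] by [].
set m := minl s.
have hm : m \in s := minl_mem ne.
have ge : forall y, y \in s -> m <= y by move=> y; apply: minl_le.
have Hj : s = joinm m (splitm m s) by rewrite joinm_splitm.
have segs : forall l, l \in splitm m s -> subseq l s && (m \notin l) by move=> l; apply: splitm_mem.
have szSS : 1 < size (splitm m s).
  by rewrite size_splitm ltnS -has_count has_pred1.
have lett : forall l, l \in splitm m s -> forall y, y \in l -> m < y.
  move=> l hl y hy; have /andP [h1 h2] := segs l hl.
  have hys : y \in s := mem_subseq h1 hy.
  rewrite ltn_neqAle ge // andbT; apply/eqP => e; subst y; by rewrite hy in h2.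
have IHs : forall l, l \in splitm m s -> pt_le (Tw l) (Tw (Tswap a l)).
  move=> l hl; apply: IH; last by apply: sepb_subseq hsep; have /andP [] := segs l hl.
  have := seg_lt ne hl; move: hsz; rewrite /= => ? ?; lia.
case: (boolP ((m == a) && (a.+1 \in s))) => [/andP [/eqP ema ha1]|hcase]; last first.
  rewrite {1 2}Hj Tswap_joinm (Tw_joinm szSS lett) Tw_joinm ?size_map //.
    rewrite -map_comp; apply: node_mono => l /= hl; exact: IHs (In_mem hl).
  move=> l /mapP [l0 hl0 ->] y; rewrite mem_Tswap => hy.
  have [y0 ey] : exists y0, y = sig a y0 by exists (sig a y); rewrite sigK.
  subst y; rewrite sigK in hy.
  have /andP [hsub _] := segs l0 hl0.
  have hys : y0 \in s := mem_subseq hsub hy.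
  have hmy := lett l0 hl0 y0 hy.
  have f1 : m = a -> y0 <> a.+1.
    by move=> e e'; move: hcase; rewrite e eqxx -e' hys.
  have f2 : m = a.+1 -> y0 <> a.
    by move=> e e'; have := ge y0 hys; lia.
  rewrite /sig; repeat case: eqP; lia.
have [SS' [Sk ESS]] : exists SS' Sk, splitm m s = rcons SS' Sk.
  case E: (splitm m s) szSS => [|h t] // _; exists (belast h t), (last h t); exact: lastI.
have neS : SS' != [::] by move: szSS; rewrite ESS size_rcons; clear; case: SS'.
have Hj2 : s = joinm a SS' ++ a :: Sk by rewrite {1}Hj ESS joinm_rcons // ema.
have na1 : a.+1 \notin joinm a SS'.
  move: hsep; rewrite Hj2 sepb_cat => /and3P [_ /implyP h _].
  by apply/negP => /h; rewrite mem_head.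
have SSin : forall l, l \in SS' -> l \in splitm m s by move=> l hl; rewrite ESS mem_rcons in_cons hl orbT.
have Skin : Sk \in splitm m s by rewrite ESS mem_rcons mem_head.
rewrite {1 2}Hj ESS ema; apply: rot_core => //.
- move=> l hl y hy; split; first by rewrite -ema; apply: lett (SSin l hl) y hy.
  by apply/negP => /eqP e; subst y; rewrite (mem_joinm_in a hl hy) in na1.
- by move=> y hy; rewrite -ema; apply: lett Skin y hy.
- move: ha1; rewrite Hj2 mem_cat (negbTE na1) in_cons /=; case: eqP => //; lia.
Qed.


Definition ltree_ind' (P : ltree -> Prop) (HL : P LLeaf)
  (HN : forall k cs, List.Forall P cs -> P (LNode k cs)) : forall u, P u :=
  fix IH u := match u with
  | LLeaf => HL
  | LNode k cs => HN k cs ((fix go cs : List.Forall P cs := match cs with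
       | [::] => @List.Forall_nil _ P
       | c :: cs' => @List.Forall_cons _ P c cs' (IH c) (go cs') end) cs)
  end.

Definition tree_ind' (P : tree -> Prop) (HL : P Leaf)
  (HN : forall cs, List.Forall P cs -> P (Node cs)) : forall t, P t :=
  fix IH t := match t with
  | Leaf => HL
  | Node cs => HN cs ((fix go cs : List.Forall P cs := match cs with
       | [::] => @List.Forall_nil _ P
       | c :: cs' => @List.Forall_cons _ P c cs' (IH c) (go cs') end) cs)
  end.

Lemma Forall_In (T : Type) (P : T -> Prop) cs c : List.Forall P cs -> List.In c cs -> P c.
Proof. elim => //= x l hx _ IH [<-|h]; [exact: hx|exact: IH]. Qed.

Lemma all_In (T : Type) (P : pred T) cs c : all P cs -> List.In c cs -> P c.
Proof. elim: cs => //= x cs IH /andP [h1 h2] [<-|h]; [exact: h1|exact: IH]. Qed.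

Lemma mem_map_In (T : Type) (f : T -> seq nat) cs l : l \in map f cs -> exists2 c, List.In c cs & l = f c.
Proof.
elim: cs => //= x cs IH; rewrite in_cons => /orP [/eqP ->|h]; first by exists x; [left|].
by case: (IH h) => c hc ->; exists c; [right|].
Qed.

Lemma word_joinm k cs : word (LNode k cs) = joinm k (map word cs).
Proof. case: cs => //= c cs; by rewrite -map_comp. Qed.

Definition rootgt (m : nat) (u : ltree) : bool :=
  match u with LLeaf => true | LNode k _ => m < k end.

Lemma inc_word_gt u : forall m, increasing u -> rootgt m u -> forall y, y \in word u -> m < y.
Proof.
elim/ltree_ind': u => [|k cs IH] m //; rewrite word_joinm => /andP [hr hi] hm y.
move=> /mem_joinm /orP [/eqP ->//|/flattenP [l hl hy]].
case: (mem_map_In hl) => c hc el; subst l.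
have hm' : m < k := hm. have := Forall_In IH hc k (all_In hi hc) (all_In hr hc) y hy; lia.
Qed.

Lemma map_Forall (T U : Type) (f g : T -> U) cs : List.Forall (fun c => f c = g c) cs -> map f cs = map g cs.
Proof. by elim => //= x l -> _ ->. Qed.

Lemma Forall_impl' (T : Type) (P Q : T -> Prop) cs :
  (forall c, List.In c cs -> P c -> Q c) -> List.Forall P cs -> List.Forall Q cs.
Proof.
move=> h H; elim: H h => [|x l hx hl IH] h; constructor.
- by apply: h => //; left.
- by apply: IH => c hc; apply: h; right.
Qed.

Lemma Tw_word u : increasing u -> planar (pi_tree u) -> Tw (word u) = pi_tree u.
Proof.
elim/ltree_ind': u => [|k cs IH] //; rewrite word_joinm => /andP [hr hi] /andP [hsz hp].
have hsz' : 1 < size (map word cs) by move: hsz; rewrite !size_map.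
rewrite Tw_joinm //; last first.
  move=> l /mem_map_In [c hc ->] y hy.
  exact: inc_word_gt (all_In hi hc) (all_In hr hc) y hy.
rewrite -map_comp; congr Node; apply: map_Forall.
apply: Forall_impl' IH => c hc /= h; apply: h; first exact: all_In hi hc.
by apply: (@all_In _ planar (map pi_tree cs)) => //; apply: List.in_map.
Qed.


Lemma iotaS' m n : iota m.+1 n = map S (iota m n).
Proof. by elim: n m => //= n IH m; rewrite IH. Qed.

Lemma positions_cons x w c : positions (x :: w) c =
  if x == c then 0 :: map S (positions w c) else map S (positions w c).
Proof.
rewrite /positions /= iotaS' filter_map.
by case: ifP.
Qed.

Lemma positions_Tswap a w c : positions (Tswap a w) c = positions w (sig a c).
Proof.
elim: w => [|x w IH]; first by [].
by rewrite TswapE /= -TswapE !positions_cons IH sig_eq.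
Qed.

Lemma positions_nil w c : (positions w c == [::]) = (c \notin w).
Proof.
elim: w => [|x w IH] //; rewrite positions_cons in_cons negb_or [c == x]eq_sym.
by case: (x == c) => //=; rewrite -IH; case: (positions w c).
Qed.

Lemma headS (l : seq nat) : head 0 (map S l) = if l is [::] then 0 else (head 0 l).+1.
Proof. by case: l. Qed.
Lemma lastS (l : seq nat) : last 0 (map S l) = if l is [::] then 0 else (last 0 l).+1.
Proof. case: l => //= p l; by rewrite last_map. Qed.

Lemma pos_sepb b c w : b != c -> last 0 (positions w b) < head 0 (positions w c) -> sepb b c w.
Proof.
move=> ne; elim: w => [|x w IH] //; rewrite !positions_cons /=.
case: (x =P c) => [exc|nxc].
  by subst x; rewrite eq_sym (negbTE ne) /= ltn0.
case: (x =P b) => [exb|nxb] /=.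
  subst x; rewrite lastS headS => h.
  case E: (positions w b) h => [|p ps] h.
    by apply: sepb_nob; rewrite -positions_nil E.
  case E2: (positions w c) h => [|q qs] h //.
  apply: IH; rewrite E E2 /=; move: h; rewrite /=; lia.
rewrite lastS headS => h.
case E: (positions w b) h => [|p ps] h.
  by apply: sepb_nob; rewrite -positions_nil E.
case E2: (positions w c) h => [|q qs] h //.
apply: IH; rewrite E E2 /=; move: h; rewrite /=; lia.
Qed.

Lemma sepb_pos b c w : b != c -> b \in w -> c \in w -> sepb b c w ->
  last 0 (positions w b) < head 0 (positions w c).
Proof.
move=> ne; elim: w => [|x w IH] //; rewrite !positions_cons !in_cons /=.
case: (x =P c) => [exc|nxc].
  subst x; rewrite (negbTE ne) /= => hb _ h; by rewrite (negbTE h) in hb.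
case: (x =P b) => [exb|nxb] /=.
  subst x => _; case: (c =P b) => [e|_]; first by rewrite e eqxx in ne.
  move=> /= hc h.
  have hc' : positions w c != [::] by rewrite positions_nil hc.
  rewrite lastS headS; case E: (positions w b) => [|p ps].
    by case: (positions w c) hc'.
  have hb : b \in w by rewrite -[b \in w]negbK -positions_nil E.
  have := IH hb hc h; rewrite E; case: (positions w c) hc' => //= q qs _; lia.
case: (b =P x) => [e|_]; first by case: nxb.
case: (c =P x) => [e|_]; first by case: nxc.
move=> /= hb hc h.
have := IH hb hc h.
have hb' : positions w b != [::] by rewrite positions_nil hb.
have hc' : positions w c != [::] by rewrite positions_nil hc.
rewrite lastS headS; case: (positions w b) hb' => // p ps _.
case: (positions w c) hc' => //= q qs _; lia.
Qed.


Lemma maxletter_ge w x : x \in w -> x <= maxletter w.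
Proof.
elim: w => //= y w IH; rewrite in_cons => /orP [/eqP ->|h]; first lia.
have := IH h; rewrite /maxletter /=; lia.
Qed.
Lemma maxletter_le w m : (forall x, x \in w -> x <= m) -> maxletter w <= m.
Proof.
elim: w => //= y w IH h; rewrite /maxletter /= -/(maxletter w).
have h1 : forall x, x \in w -> x <= m by move=> x hx; apply: h; rewrite in_cons hx orbT.
have := h y (mem_head _ _); have := IH h1; lia.
Qed.
Lemma maxletter_eqi w1 w2 : w1 =i w2 -> maxletter w1 = maxletter w2.
Proof.
move=> e; apply/eqP; rewrite eqn_leq; apply/andP; split; apply: maxletter_le => x hx;
  apply: maxletter_ge; by rewrite ?e // -e.
Qed.
Lemma packed_eqi w1 w2 : w1 =i w2 -> packed w1 = packed w2.
Proof.
move=> e; rewrite /packed (eq_all_r e) (maxletter_eqi e); congr andb; apply: eq_all => a.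
by rewrite /= e.
Qed.
Lemma packed_pos w x : packed w -> x \in w -> 0 < x.
Proof. by case/andP => /allP h _ /h. Qed.
Lemma packed_down w x y : packed w -> x \in w -> 0 < y -> y <= x -> y \in w.
Proof.
case/andP => _ /allP h hx hy hyx; apply: h; rewrite mem_iota.
have := maxletter_ge hx; lia.
Qed.
Lemma packed_range w n : (forall x, (x \in w) = (0 < x <= n)) -> packed w.
Proof.
move=> h; apply/andP; split; first by apply/allP => x; rewrite h => /andP [].
apply/allP => y; rewrite mem_iota h => /andP [h1 h2].
have : maxletter w <= n by apply: maxletter_le => x; rewrite h => /andP [].
lia.
Qed.

Lemma count_sum (T : eqType) (P : pred T) (s : seq T) : count P s = \sum_(x <- s) P x.
Proof. elim: s => [|x s IH]; by rewrite ?big_nil ?big_cons //= IH. Qed.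

Lemma count_allpairs2 (P : pred (nat * nat)) (r1 r2 : seq nat) :
  count P [seq (x, y) | x <- r1, y <- r2] = \sum_(x <- r1) \sum_(y <- r2) P (x, y).
Proof.
elim: r1 => [|x r1 IH]; rewrite ?big_nil ?big_cons //=.
by rewrite count_cat count_map IH count_sum.
Qed.

Lemma size_iInv w : size (iInv w) =
  \sum_(p <- iota 1 (maxletter w)) \sum_(q <- iota 1 (maxletter w)) iinv_pair w p q.
Proof. by rewrite /iInv size_filter count_allpairs2. Qed.

Lemma sum_delta (r : seq nat) u v c : uniq r -> u \in r -> v \in r ->
  \sum_(p <- r) \sum_(q <- r) ((p == u) && (q == v)) * c = c.
Proof.
move=> ur hu hv.
have h1 : forall (t : nat) (F : nat -> nat), \sum_(q <- r) (q == t) * F q = count_mem t r * F t.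
  move=> t F; elim: (r) => [|x s IH]; rewrite ?big_nil ?big_cons //= IH.
  by case: eqP => [->|_]; rewrite ?mul1n ?mul0n ?add0n // mulnDl mul1n.
rewrite (eq_bigr (fun p => (p == u) * (\sum_(q <- r) (q == v) * c))); last first.
  by move=> p _; rewrite big_distrr /=; apply: eq_bigr => q _; rewrite -mulnb mulnA.
by rewrite h1 h1 !count_uniq_mem // hu hv !mul1n.
Qed.

Lemma sum_perm (r : seq nat) (F : nat -> nat) f : perm_eq (map f r) r ->
  \sum_(p <- r) F (f p) = \sum_(p <- r) F p.
Proof. move=> h; transitivity (\sum_(p <- map f r) F p); first by rewrite big_map. exact: perm_big. Qed.

Lemma perm_sig a M : 0 < a -> a < M -> perm_eq (map (sig a) (iota 1 M)) (iota 1 M).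
Proof.
move=> h1 h2; apply: uniq_perm.
- by rewrite (map_inj_uniq (@sig_inj a)) iota_uniq.
- exact: iota_uniq.
move=> x; rewrite -{1}(sigK a x) (mem_map (@sig_inj a)) !mem_iota /sig.
repeat case: eqP; lia.
Qed.

Lemma iinv_swap a y p q :
  iinv_pair (Tswap a y) p q + ((p == a.+1) && (q == a)) * iinv_pair y a a.+1 =
  iinv_pair y (sig a p) (sig a q) + ((p == a) && (q == a.+1)) * iinv_pair (Tswap a y) a a.+1.
Proof.
rewrite /iinv_pair !positions_Tswap.
have sa := sig_a a; have sa1 := sig_a1 a.
have so : forall x, x <> a -> x <> a.+1 -> sig a x = x.
  by move=> x h1 h2; rewrite /sig; case: eqP => // _; case: eqP.
have na : (a.+1 == a) = false by apply/eqP; lia.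
have na' : (a == a.+1) = false by apply/eqP; lia.
case: (p =P a) => [->|pa]; [| case: (p =P a.+1) => [->|pa1]];
case: (q =P a) => [->|qa]; try (case: (q =P a.+1) => [->|qa1]);
rewrite ?sa ?sa1 ?(so p) ?(so q) ?eqxx ?na ?na' //=.
all: try (rewrite ?muln0 ?mul0n ?addn0 ?mul1n ?ltnn ?ltnSn /= //).
all: try (rewrite (ltnNge a.+1 a) leqnSn /= ?add0n //).
all: congr andb; lia.
Qed.

Lemma sum2_split (r : seq nat) (F G : nat -> nat -> nat) :
  \sum_(p <- r) \sum_(q <- r) (F p q + G p q) =
  \sum_(p <- r) \sum_(q <- r) F p q + \sum_(p <- r) \sum_(q <- r) G p q.
Proof. by rewrite -big_split; apply: eq_bigr => p _; rewrite big_split. Qed.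

Lemma iInv_count a y : packed y -> 0 < a -> a \in y -> a.+1 \in y ->
  size (iInv (Tswap a y)) + iinv_pair y a a.+1 = size (iInv y) + iinv_pair (Tswap a y) a a.+1.
Proof.
move=> hpk ha h0 h1.
have ex : Tswap a y =i y := Tswap_eqi h0 h1.
rewrite !size_iInv (maxletter_eqi ex).
set r := iota 1 (maxletter y).
have ur : uniq r := iota_uniq _ _.
have hm := maxletter_ge h1.
have r0 : a \in r by rewrite mem_iota; lia.
have r1 : a.+1 \in r by rewrite mem_iota; lia.
have hp : perm_eq (map (sig a) r) r by apply: perm_sig; lia.
have E1 : \sum_(p <- r) \sum_(q <- r) (iinv_pair (Tswap a y) p q + ((p == a.+1) && (q == a)) * iinv_pair y a a.+1)
  = \sum_(p <- r) \sum_(q <- r) (iinv_pair y (sig a p) (sig a q) + ((p == a) && (q == a.+1)) * iinv_pair (Tswap a y) a a.+1).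
  by apply: eq_bigr => p _; apply: eq_bigr => q _; apply: iinv_swap.
have E2 : \sum_(p <- r) \sum_(q <- r) iinv_pair y (sig a p) (sig a q) = \sum_(p <- r) \sum_(q <- r) iinv_pair y p q.
  rewrite (eq_bigr (fun p => \sum_(q <- r) iinv_pair y (sig a p) q)).
    exact: (sum_perm (fun p => \sum_(q <- r) iinv_pair y p q) hp).
  move=> p _; exact: (sum_perm (fun q => iinv_pair y (sig a p) q) hp).
move: E1; rewrite !sum2_split E2 !sum_delta //.
Qed.


Lemma cover_sepb x y : pw_cover x y -> exists a, sepb a a.+1 x /\ y = Tswap a x.
Proof.
case=> px py [a [ex hs]].
have ey : y = Tswap a x by rewrite ex TswapK.
exists a; split => //.
have [h0|h0] := boolP (a \in y); have [h1|h1] := boolP (a.+1 \in y).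
- have ha : 0 < a := packed_pos py h0.
  have := iInv_count py ha h0 h1; rewrite -ex hs.
  case E: (iinv_pair y a a.+1); last by lia.
  move=> _; move: E; rewrite /iinv_pair ltnSn /= => E.
  by rewrite ex sepb_Tswap sig_a sig_a1; apply: pos_sepb => //; apply/eqP; lia.
- have ha : 0 < a := packed_pos py h0.
  have hx1 : a.+1 \in x by rewrite ex mem_Tswap sig_a1.
  have hx0 : a \notin x by rewrite ex mem_Tswap sig_a.
  by rewrite (packed_down px hx1 ha (leqnSn a)) in hx0.
- case: (posnP a) => [a0|ha].
    subst a; have : 0 \in x by rewrite ex mem_Tswap.
    by move/(packed_pos px).
  by rewrite (packed_down py h1 ha (leqnSn a)) in h0.
- by move: hs; rewrite ex Tswap_id //; lia.
Qed.

Lemma part1 u v : gsp u -> gsp v -> pw_le u v -> pt_le (pi_tree u) (pi_tree v).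
Proof.
case=> pu _ iu [pv _ iv]; rewrite -(Tw_word iu pu) -(Tw_word iv pv) /pw_le /pw_le_word.
elim => [x y h|x|x y z _ h1 _ h2].
- case: (cover_sepb h) => a [hs ->]; exact: (@Tswap_mono a (size x) x (leqnn _) hs).
- exact: rt_refl.
- exact: rt_trans h1 h2.
Qed.


Definition rc (x y : seq nat) : Prop :=
  exists a, [/\ a \in x, a.+1 \in x, sepb a a.+1 x & y = Tswap a x].

Lemma rc_eqi x y : rc x y -> y =i x.
Proof. by case=> a [h0 h1 _ ->]; apply: Tswap_eqi. Qed.

Lemma rt_rc_eqi x y : clos_refl_trans _ rc x y -> y =i x.
Proof.
elim => [a b h|a|a b c _ h1 _ h2]; first exact: rc_eqi.
- by [].
- by move=> z; rewrite h2 h1.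
Qed.

Lemma rc_cover x y : packed x -> rc x y -> pw_cover x y.
Proof.
move=> px hr; have ey := rc_eqi hr; case: hr => a [h0 h1 hs ey'].
have py : packed y by rewrite (packed_eqi ey).
have ha : 0 < a := packed_pos px h0.
have y0 : a \in y by rewrite ey. have y1 : a.+1 \in y by rewrite ey.
split => //; exists a; split; first by rewrite ey' TswapK.
have := iInv_count py ha y0 y1; rewrite ey' TswapK.
have -> : iinv_pair (Tswap a x) a a.+1 = true.
  rewrite /iinv_pair ltnSn !positions_Tswap sig_a sig_a1 /=.
  apply: sepb_pos => //; apply/eqP; lia.
case E: (iinv_pair x a a.+1); last by lia.
exfalso; move: E; rewrite /iinv_pair ltnSn /= => E.
have := pos_sepb _ E; rewrite (_ : (a.+1 != a) = true); last by apply/eqP; lia.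
move=> /(_ isT) h; apply: (sepb_contra hs h h0 h1); apply/eqP; lia.
Qed.

Lemma rt_rc_pw x y : packed x -> clos_refl_trans _ rc x y -> pw_le_word x y.
Proof.
move=> px h; elim: h px => [a b h|a|a b c h h1 _ h2] pa.
- by apply: rt_step; apply: rc_cover.
- exact: rt_refl.
- have pb : packed b by rewrite (packed_eqi (rt_rc_eqi h)).
  exact: rt_trans (h1 pa) (h2 pb).
Qed.

Lemma rc_lift (P Q X Y : seq nat) : rc X Y -> (forall z, z \in X -> (z \notin P) && (z \notin Q)) ->
  rc (P ++ X ++ Q) (P ++ Y ++ Q).
Proof.
case=> a [h0 h1 hs ->] hd.
have /andP [p0 q0] := hd a h0; have /andP [p1 q1] := hd a.+1 h1.
exists a; split.
- by rewrite !mem_cat h0 orbT.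
- by rewrite !mem_cat h1 orbT.
- rewrite !sepb_cat hs (negbTE p1) /= sepb_noc //= sepb_nob //. by rewrite q0 implybT.
- rewrite [Tswap a (P ++ _)]TswapE !map_cat -!TswapE (Tswap_id p0 p1) (Tswap_id q0 q1) //.
Qed.

Lemma rt_rc_lift (P Q X Y : seq nat) : clos_refl_trans _ rc X Y ->
  (forall z, z \in X -> (z \notin P) && (z \notin Q)) ->
  clos_refl_trans _ rc (P ++ X ++ Q) (P ++ Y ++ Q).
Proof.
elim => [a b h|a|a b c h h1' _ h2'] hd.
- by apply: rt_step; apply: rc_lift.
- exact: rt_refl.
- apply: rt_trans (h1' hd) (h2' _) => z; rewrite (rt_rc_eqi h); exact: hd.
Qed.


Fixpoint nint (t : tree) : nat :=
  match t with Leaf => 0 | Node cs => (sumn (map nint cs)).+1 end.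
Definition Nl (cs : seq tree) : nat := sumn (map nint cs).

Fixpoint iol (t : tree) (b : nat) {struct t} : ltree :=
  match t with
  | Leaf => LLeaf
  | Node cs => LNode b ((fix go (cs : seq tree) (c : nat) : seq ltree :=
      match cs with
      | [::] => [::]
      | x :: cs' => iol x (c + sumn (map nint cs')) :: go cs' c
      end) cs b.+1)
  end.

Fixpoint gol (cs : seq tree) (c : nat) : seq ltree :=
  match cs with
  | [::] => [::]
  | x :: cs' => iol x (c + Nl cs') :: gol cs' c
  end.

Lemma iol_node cs b : iol (Node cs) b = LNode b (gol cs b.+1).
Proof. by []. Qed.

Lemma Nl_cat l r : Nl (l ++ r) = Nl l + Nl r.
Proof. by rewrite /Nl map_cat sumn_cat. Qed.
Lemma Nl_cons x l : Nl (x :: l) = nint x + Nl l.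
Proof. by []. Qed.

Lemma gol_cat cs1 cs2 c : gol (cs1 ++ cs2) c = gol cs1 (c + Nl cs2) ++ gol cs2 c.
Proof.
elim: cs1 => //= x cs1 IH; rewrite IH Nl_cat; congr (iol x _ :: _); lia.
Qed.

Lemma size_gol cs c : size (gol cs c) = size cs.
Proof. by elim: cs => //= x cs ->. Qed.

Lemma pi_iol t b : pi_tree (iol t b) = t.
Proof.
elim/tree_ind': t b => [|cs IH] b //; rewrite iol_node /=; congr Node.
elim: IH b.+1 => //= x l hx _ IH' c; by rewrite hx IH'.
Qed.

Lemma word_iol_shift t c : word (iol t c.+1) = map S (word (iol t c)).
Proof.
elim/tree_ind': t c => [|cs IH] c //; rewrite !iol_node !word_joinm map_joinm.
congr joinm; rewrite -map_comp.
elim: IH c.+1 => //= x l hx _ IH' c'.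
by rewrite IH' addSn hx.
Qed.

Lemma range_iol t : planar t -> forall c x, (x \in word (iol t c)) = (c <= x < c + nint t).
Proof.
elim/tree_ind': t => [|cs IH]; first by move=> _ c x; rewrite in_nil /=; lia.
move=> /andP [hsz hp] c x; rewrite iol_node word_joinm mem_joinm2; last by rewrite size_map size_gol.
suff -> : x \in flatten (map word (gol cs c.+1)) = (c.+1 <= x < c.+1 + Nl cs).
  rewrite /Nl; case: eqP => /= [e|ne]; lia.
elim: IH hp c.+1 {hsz} => [|y l hy _ IH'] /=; first by move=> _ c'; rewrite in_nil /Nl /=; lia.
move=> /andP [py pl] c'; rewrite mem_cat hy // IH' // Nl_cons; lia.
Qed.

Lemma range_gol cs : all planar cs -> forall c x,
  (x \in flatten (map word (gol cs c))) = (c <= x < c + Nl cs).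
Proof.
elim: cs => [|y l IH] /=; first by move=> _ c x; rewrite in_nil /Nl /=; lia.
move=> /andP [py pl] c x; rewrite mem_cat range_iol // IH // Nl_cons; lia.
Qed.

Lemma lrot_nint s t : lrot s t -> nint s = nint t.
Proof.
elim => [cs d ds _ _|l c c' r _ IH] /=.
  rewrite -!cats1 !map_cat !sumn_cat /=; lia.
by rewrite !map_cat !sumn_cat /= IH.
Qed.

Lemma lrot_planar s t : lrot s t -> planar s -> planar t.
Proof.
elim => [cs d ds h1 h2|l c c' r _ IH].
  rewrite /= -!cats1 all_cat /= => /andP [_ /andP [hc /andP [/andP [_ /andP [hd hds]] _]]].
  rewrite all_cat hc /= hd hds size_cat /= !andbT; apply/andP; split; lia.
rewrite /= !size_cat !all_cat /= => /andP [hs /andP [hl /andP [hc hr]]].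
by rewrite hs hl hr IH.
Qed.


Lemma gol_shift cs c : map word (gol cs c.+1) = map (map S) (map word (gol cs c)).
Proof. elim: cs => //= x cs ->; by rewrite addSn word_iol_shift. Qed.

Lemma gol1 x c : gol [:: x] c = [:: iol x c].
Proof. by rewrite /= /Nl /= addn0. Qed.
Lemma gol_cons x cs c : gol (x :: cs) c = iol x (c + Nl cs) :: gol cs c.
Proof. by []. Qed.
Lemma joinm_cons m x xs : joinm m (x :: xs) = x ++ flatten (map (cons m) xs).
Proof. by []. Qed.
Lemma map_nil' (T U : Type) (f : T -> U) : map f [::] = [::].
Proof. by []. Qed.

Definition fj (b j x : nat) : nat := if x < b + j then x else x.+1.

Lemma sig_fj b j x : sig (b + j) (fj b j x) = fj b j.+1 x.
Proof. rewrite /sig /fj; repeat (case: ifP || case: eqP); lia. Qed.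

Lemma rot_root_chain cs d ds b : 0 < size cs -> 0 < size ds -> all planar cs -> planar d ->
  all planar ds ->
  clos_refl_trans _ rc (word (iol (Node (rcons cs (Node (d :: ds)))) b))
                       (word (iol (Node (Node (rcons cs d) :: ds)) b)).
Proof.
move=> h1 h2 pc pd pds.
set N := Nl ds.
set Cw := map word (gol cs (b.+2 + nint d + N)).
set Dw := word (iol d (b.+2 + N)).
set E1 := map word (gol ds b.+1).
set F1 := flatten (map (cons b) E1).
have Es : word (iol (Node (rcons cs (Node (d :: ds)))) b) = joinm b (rcons Cw Dw) ++ map S F1.
  rewrite iol_node word_joinm -cats1 gol_cat map_cat gol1 map_cons map_nil' iol_node word_joinm.
  rewrite gol_cons map_cons joinm_cons gol_shift cats1.
  have -> : b.+1 + Nl [:: Node (d :: ds)] = b.+2 + nint d + N by rewrite /N /Nl /=; lia.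
  rewrite -/Cw -/E1 joinm_rcons_cat -/Dw.
  congr (_ ++ _); rewrite /F1 map_flatten -!map_comp; congr flatten; exact: eq_map.
have Et : word (iol (Node (Node (rcons cs d) :: ds)) b) = joinm (b + N.+1) (rcons Cw Dw) ++ F1.
  rewrite iol_node word_joinm gol_cons map_cons joinm_cons iol_node word_joinm.
  rewrite -cats1 gol_cat map_cat gol1 map_cons map_nil' cats1.
  have -> : (b.+1 + Nl ds).+1 + Nl [:: d] = b.+2 + nint d + N by rewrite /N /Nl /=; lia.
  have -> : (b.+1 + Nl ds).+1 = b.+2 + N by rewrite /N; lia.
  by rewrite -/Cw -/Dw -/E1 -/F1 addnS -addSn.
pose W j := joinm (b + j) (rcons Cw Dw) ++ map (fj b j) F1.
have F1r : forall x, x \in F1 -> b <= x <= b + N.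
  move=> x; rewrite /F1 mem_flatten_cons => /orP [/andP [_ /eqP ->]|]; first lia.
  by rewrite /E1 range_gol // /N; lia.
have neE : E1 != [::] by rewrite /E1 -size_eq0 size_map size_gol; lia.
have F1in : forall j, j <= N -> b + j \in F1.
  move=> j hj; rewrite /F1 mem_flatten_cons; case: (posnP j) => [->|hj0].
    by rewrite neE addn0 eqxx.
  by rewrite /E1 range_gol // /N -/N; apply/orP; right; lia.
have CDr : forall l, l \in rcons Cw Dw -> forall x, x \in l -> b + N.+1 < x.
  move=> l; rewrite mem_rcons in_cons => /orP [/eqP ->|hl] x.
    by rewrite /Dw range_iol //; lia.
  move=> hx; have : x \in flatten Cw by apply/flattenP; exists l.
  rewrite /Cw range_gol //; lia.
have szCD : 1 < size (rcons Cw Dw) by rewrite size_rcons /Cw size_map size_gol; lia.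
have step : forall j, j <= N -> rc (W j) (W j.+1).
  move=> j hj; exists (b + j); split.
  - by rewrite mem_cat mem_joinm_sep.
  - rewrite mem_cat; apply/orP; right.
    have <- : fj b j (b + j) = (b + j).+1 by rewrite /fj ltnn.
    by apply: map_f; apply: F1in.
  - have na1 : (b + j).+1 \notin joinm (b + j) (rcons Cw Dw).
      apply/negP => /mem_joinm /orP [/eqP|/flattenP [l hl hx]]; first lia.
      have := CDr l hl _ hx; lia.
    rewrite sepb_cat sepb_noc // (negbTE na1) /= sepb_nob //.
    by apply/negP => /mapP [x _]; rewrite /fj; case: ifP; lia.
  - rewrite /W TswapE map_cat -TswapE Tswap_joinm sig_a addnS; congr (joinm _ _ ++ _).
      apply/esym/map_id_in => l hl; apply: Tswap_id; apply/negP => hx;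
        have := CDr l hl _ hx; lia.
    by apply/esym; rewrite -map_comp; apply: eq_map => x /=; rewrite sig_fj.
have chain : forall j, j <= N.+1 -> clos_refl_trans _ rc (W 0) (W j).
  elim => [|j IH] hj; first exact: rt_refl.
  apply: rt_trans (IH _) (rt_step _ _ _ _ (step j _)); lia.
rewrite Es Et.
have -> : joinm b (rcons Cw Dw) ++ map S F1 = W 0.
  rewrite /W addn0; congr (_ ++ _); apply/eq_in_map => x hx; rewrite /fj.
  have := F1r x hx; case: ifP; lia.
have -> : joinm (b + N.+1) (rcons Cw Dw) ++ F1 = W N.+1.
  rewrite /W; congr (_ ++ _); apply/esym/map_id_in => x hx; rewrite /fj.
  have := F1r x hx; case: ifP; lia.
exact: chain.
Qed.


Lemma mem_flatten_rcat (m : nat) (L : seq (seq nat)) z :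
  z \in flatten (map (fun y => y ++ [:: m]) L) -> (z == m) || (z \in flatten L).
Proof.
elim: L => //= y L IH; rewrite !mem_cat in_cons in_nil orbF => /orP [/orP [h|->]|/IH].
- by rewrite h orbT.
- by [].
- by case/orP => [->|->]; rewrite ?orbT.
Qed.

Lemma rot_local s t : lrot s t -> planar s -> forall b,
  clos_refl_trans _ rc (word (iol s b)) (word (iol t b)).
Proof.
elim => [cs d ds h1 h2|l c c' r hr IH] ps b.
  case/andP: ps => _; rewrite all_rcons => /andP [/andP [_ /andP [hd hds]] hc].
  exact: rot_root_chain.
case/andP: ps => _; rewrite all_cat => /andP [pl /andP [pc pr]].
have ne : nint c' = nint c by rewrite (lrot_nint hr).
rewrite !iol_node !word_joinm !gol_cat !gol_cons !map_cat !map_cons !joinm_mid !Nl_cons ne.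
apply: rt_rc_lift; first exact: IH.
move=> z; rewrite range_iol // => hz; apply/andP; split; apply/negP.
  move/mem_flatten_rcat => /orP [/eqP|]; first lia.
  rewrite range_gol //; lia.
rewrite mem_flatten_cons => /orP [/andP [_ /eqP]|]; first lia.
rewrite range_gol //; lia.
Qed.

Lemma pt_local s t : pt_le s t -> planar s -> forall b,
  clos_refl_trans _ rc (word (iol s b)) (word (iol t b)).
Proof.
elim => [x y h|x|x y z h h1 _ h2] ps b.
- exact: rot_local.
- exact: rt_refl.
- have py : planar y.
    elim: h ps {h1 h2} => [x' y' h'|x'|x' y' z' _ IH1 _ IH2] px; [exact: lrot_planar h' px|by []|].
    exact: IH2 (IH1 px).
  exact: rt_trans (h1 ps b) (h2 py b).
Qed.


Lemma labels_node k cs : labels (LNode k cs) = k :: flatten (map labels cs).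
Proof. by []. Qed.
Lemma pi_node k cs : pi_tree (LNode k cs) = Node (map pi_tree cs).
Proof. by []. Qed.

Lemma In_map_mem (T : Type) (f : T -> seq nat) cs c : List.In c cs -> f c \in map f cs.
Proof. elim: cs => //= x cs IH [->|h]; rewrite in_cons; first by rewrite eqxx. by rewrite IH ?orbT. Qed.

Lemma labels_word u : planar (pi_tree u) -> forall x, x \in labels u -> x \in word u.
Proof.
elim/ltree_ind': u => [|k cs IH] //; rewrite pi_node word_joinm labels_node.
case/andP => hsz hp x; rewrite in_cons => /orP [/eqP ->|].
  by apply: mem_joinm_sep; rewrite size_map -(size_map pi_tree).
case/flattenP => l /mem_map_In [c hc ->] hx.
apply: (@mem_joinm_in _ _ (word c)); first exact: In_map_mem.
apply: (Forall_In IH hc) => //.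
by apply: (@all_In _ planar (map pi_tree cs)) => //; apply: List.in_map.
Qed.

Lemma inc_labels_gt u : forall m, increasing u -> rootgt m u -> forall x, x \in labels u -> m < x.
Proof.
elim/ltree_ind': u => [|k cs IH] m //; rewrite labels_node => /andP [hr hi] hm x.
have hm' : m < k := hm.
rewrite in_cons => /orP [/eqP ->//|/flattenP [l /mem_map_In [c hc ->] hx]].
have := Forall_In IH hc k (all_In hi hc) (all_In hr hc) x hx; lia.
Qed.

Lemma size_labels u : size (labels u) = nint (pi_tree u).
Proof.
elim/ltree_ind': u => [|k cs IH] //; rewrite labels_node pi_node /= size_flatten.
congr S; rewrite /shape -!map_comp; congr sumn; apply: map_Forall.
exact: Forall_impl' IH.
Qed.

Lemma nth_mid (s1 s2 : seq nat) y : nth 0 (s1 ++ y :: s2) (size s1) = y.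
Proof. by rewrite nth_cat ltnn subnn. Qed.

Lemma avoid_infix P X Q : avoids213 (P ++ X ++ Q) -> avoids213 X.
Proof.
move=> h i j k hij hjk hk.
have e : forall n, n < size X -> nth 0 (P ++ X ++ Q) (size P + n) = nth 0 X n.
  move=> n hn; rewrite nth_cat ltnNge leq_addr /= addKn nth_cat hn //.
rewrite -!e //; try lia.
apply: h; rewrite ?size_cat; lia.
Qed.

Lemma A213 P X k Y x z : avoids213 (P ++ X ++ k :: Y) -> x \in X -> z \in Y -> k < x -> z <= x.
Proof.
move=> h hx hz hkx; move: h; case/splitPr: hx => X1 X2; case/splitPr: hz => Y1 Y2 h.
set w := P ++ (X1 ++ x :: X2) ++ k :: (Y1 ++ z :: Y2) in h.
have e1 : w = (P ++ X1) ++ x :: (X2 ++ k :: Y1 ++ z :: Y2) by rewrite /w -!catA ?cat_cons -?catA.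
have e2 : w = (P ++ X1 ++ x :: X2) ++ k :: (Y1 ++ z :: Y2) by rewrite /w -!catA ?cat_cons -?catA.
have e3 : w = (P ++ X1 ++ x :: X2 ++ k :: Y1) ++ z :: Y2 by rewrite /w -!catA ?cat_cons -?catA.
have := h (size (P ++ X1)) (size (P ++ X1 ++ x :: X2)) (size (P ++ X1 ++ x :: X2 ++ k :: Y1)).
have n1 : nth 0 w (size (P ++ X1)) = x by rewrite e1 nth_mid.
have n2 : nth 0 w (size (P ++ X1 ++ x :: X2)) = k by rewrite e2 nth_mid.
have n3 : nth 0 w (size (P ++ X1 ++ x :: X2 ++ k :: Y1)) = z by rewrite e3 nth_mid.
rewrite n1 n2 n3 /w !size_cat /=.
rewrite !size_cat /= => H; have : ~ (k < x /\ x < z) by apply: H; lia.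
lia.
Qed.

Lemma split_iota (A B : seq nat) c : perm_eq (A ++ B) (iota c (size A + size B)) ->
  (forall x, x \in A -> forall z, z \in B -> z <= x) ->
  perm_eq B (iota c (size B)) /\ perm_eq A (iota (c + size B) (size A)).
Proof.
move=> hp hb.
have U : uniq (A ++ B) by rewrite (perm_uniq hp) iota_uniq.
move: (U); rewrite cat_uniq => /and3P [uA _ uB].
have mAB : forall y, (y \in A ++ B) = (c <= y < c + (size A + size B)).
  by move=> y; rewrite (perm_mem hp) mem_iota.
have subB : {subset iota c (size B) <= B}.
  move=> y; rewrite mem_iota => hy; apply/negPn/negP => nyB.
  have yA : y \in A by have := mAB y; rewrite mem_cat (negbTE nyB) orbF => ->; lia.
  have : {subset B <= iota c (y - c)}.
    move=> z hz; rewrite mem_iota.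
    have := mAB z; rewrite mem_cat hz orbT => /esym /andP [hz1 _].
    have := hb y yA z hz; have zy : z <> y by move=> e; subst; rewrite hz in nyB.
    lia.
  move/(uniq_leq_size uB); rewrite size_iota => h; move/andP: hy => [h1 h2]; change (is_true (@size nat B <= y - c)) in h; lia.
have [_ eB] := uniq_min_size (iota_uniq c (size B)) subB (eq_leq (esym (size_iota _ _))).
split; first by apply: uniq_perm; [exact: uB|exact: iota_uniq|move=> y; rewrite eB].
have subA : {subset iota (c + size B) (size A) <= A}.
  move=> y hy; have := mAB y; move: hy; rewrite mem_iota mem_cat => hy.
  have : y \notin B by rewrite -eB mem_iota; lia.
  move=> /negbTE ->; rewrite orbF => ->; lia.
have [_ eA] := uniq_min_size (iota_uniq (c + size B) (size A)) subA (eq_leq (esym (size_iota _ _))).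
by apply: uniq_perm; [exact: uA|exact: iota_uniq|move=> y; rewrite eA].
Qed.


Lemma flat_cons_joinm (m : nat) (L : seq (seq nat)) : L != [::] ->
  flatten (map (cons m) L) = m :: joinm m L.
Proof. by case: L. Qed.

Definition UP (u : ltree) : Prop := forall b, increasing u -> planar (pi_tree u) ->
  perm_eq (labels u) (iota b (size (labels u))) -> avoids213 (word u) -> u = iol (pi_tree u) b.

Lemma gol_uniq k (cs : seq ltree) : forall P c,
  List.Forall UP cs -> all increasing cs -> all planar (map pi_tree cs) ->
  (forall c, List.In c cs -> forall x, x \in labels c -> k < x) ->
  avoids213 (P ++ joinm k (map word cs)) ->
  perm_eq (flatten (map labels cs)) (iota c (size (flatten (map labels cs)))) ->
  gol (map pi_tree cs) c = cs.
Proof.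
elim: cs => [|c0 rest IHl] P c Hf hi hp hk ha hperm; first by [].
move/List.Forall_cons_iff: Hf => [H0 Hr].
case/andP: hi => hi0 hir; case/andP: hp => hp0 hpr.
rewrite map_cons joinm_cons in ha.
set A := labels c0 in hperm *; set B := flatten (map labels rest) in hperm *.
have blocks : forall x, x \in A -> forall z, z \in B -> z <= x.
  move=> x hx z /flattenP [l /mem_map_In [c' hc' el] hz]; subst l.
  have ne : map word rest != [::] by case: (rest) hc'.
  move: ha; rewrite flat_cons_joinm // => ha'.
  apply: (A213 ha').
  - exact: labels_word hp0 x hx.
  - apply: (mem_joinm_in _ (In_map_mem word hc')).
    apply: labels_word hz.
    exact: (@all_In _ planar (map pi_tree rest)) hpr (List.in_map _ _ _ hc').
  - exact: hk c0 (or_introl erefl) x hx.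
have hperm' : perm_eq (A ++ B) (iota c (size A + size B)) by rewrite -size_cat.
have [hB hA] := split_iota hperm' blocks.
have e0 : c0 = iol (pi_tree c0) (c + size B) := H0 _ hi0 hp0 hA (avoid_infix ha).
have eB : size B = Nl (map pi_tree rest).
  rewrite /B size_flatten /shape -map_comp /Nl -map_comp; congr sumn.
  by apply: eq_map => u /=; rewrite size_labels.
rewrite map_cons gol_cons -eB -e0; congr (_ :: _).
case: (posnP (size rest)) => [/size0nil Er|szr]; first by subst rest.
apply: (IHl (P ++ word c0 ++ [:: k])) => //.
- by move=> c' hc'; apply: hk; right.
- move: ha; rewrite flat_cons_joinm; last by rewrite -size_eq0 size_map; lia.
  by rewrite -!catA.
Qed.

Lemma iol_uniq u : UP u.
Proof.
elim/ltree_ind': u => [|k cs IH] b //.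
move=> hi hp; rewrite labels_node => hperm ha.
rewrite pi_node iol_node.
case/andP: hi => hr hic; case/andP: hp => hsz hpc.
set L := flatten (map labels cs) in hperm *.
have gtk : forall x, x \in L -> k < x.
  move=> x /flattenP [l /mem_map_In [c hc ->] hx].
  exact: inc_labels_gt (all_In hic hc) (all_In hr hc) x hx.
have hbk : b <= k by have := perm_mem hperm k; rewrite mem_head mem_iota => /esym /andP [].
have ekb : k = b.
  have : b \in k :: L by rewrite (perm_mem hperm) mem_iota /=; lia.
  rewrite in_cons => /orP [/eqP -> //|/gtk]; lia.
subst k.
have hperm2 : perm_eq L (iota b.+1 (size L)) by rewrite -(perm_cons b).
congr LNode; symmetry; apply: (@gol_uniq b cs [::]) => //.
- move=> c hc x hx; apply: gtk; apply/flattenP; exists (labels c) => //; exact: In_map_mem.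
- by rewrite /= -word_joinm.
Qed.


Lemma iota_eq t u : is_iota t u -> u = iol t 1.
Proof.
case=> [[hp hperm hi] [<- ha]].
exact: iol_uniq.
Qed.

Theorem mainTheorem8 (u v : ltree) (s t : tree) :
  gsp u -> gsp v -> degree (pi_tree u) = degree (pi_tree v) ->
  planar s -> planar t -> degree s = degree t ->
  (pw_le u v -> pt_le (pi_tree u) (pi_tree v)) /\
  (pt_le s t -> forall us ut : ltree, is_iota s us -> is_iota t ut -> pw_le us ut).
Proof.
move=> gu gv _ ps _ _; split; first exact: part1.
move=> hst us ut hus hut; rewrite /pw_le (iota_eq hus) (iota_eq hut).
apply: rt_rc_pw; last exact: pt_local.
apply: (@packed_range _ (nint s)) => x; rewrite range_iol //; lia.
Qed.
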